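(* For integers $n\ge1$ and $d\ge1$, let $N(n,d)$ be the number of cycle set structures on a fixed $n$-element set whose class divides $d$. If $d=p_1^{a_1}\cdots p_r^{a_r}$ is the prime factorization of $d$, then $$N(n,d)\le\prod_{i=1}^r N(n,p_i^{a_i}).$$
   Context: A cycle set structure on a set $S$ is a binary operation $*$ such that for every $s$ the map $t\mapsto s*t$ is a bijection of $S$ and $(s*t)*(s*u)=(t*s)*(t*u)$ for all $s,t,u\in S$. Write $S=\{s_1,\dots,s_n\}$, let $\psi(s)\in\mathfrak S_n$ satisfy $s_i*s_j=s_{\psi(s_i)(j)}$, $T(s)=s*s$, and $\psi_k(s)=\psi(T^{k-1}(s))\circ\cdots\circ\psi(T(s))\circ\psi(s)$. The class of the cycle set is the least integer $d\ge1$ with $\psi_d(s)=\mathrm{id}$ for all $s\in S$. (The paper does not specify whether cycle sets are counted up to isomorphism; here they are counted as operations on a fixed labelled set.) *)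

(* Defs.v *)
From mathcomp Require Import all_boot.
Set Implicit Arguments. Unset Strict Implicit. Unset Printing Implicit Defensive.

(* A binary operation on the labelled set S = 'I_n, as a curried finite function:
   op s t = s * t.  psi(s) is the map t |-> s * t. *)
Definition binop (n : nat) := {ffun 'I_n -> {ffun 'I_n -> 'I_n}}.

Definition is_cycle_set n (op : binop n) : bool :=
  [forall s, injectiveb (op s)] &&
  [forall s, forall t, forall u, op (op s t) (op s u) == op (op t s) (op t u)].

Definition Tmap n (op : binop n) (s : 'I_n) : 'I_n := op s s.

Fixpoint psik n (op : binop n) (k : nat) (s : 'I_n) : 'I_n -> 'I_n :=
  match k with
  | 0 => id
  | k'.+1 => fun t => op (iter k' (Tmap op) s) (psik op k' s t)
  end.

Definition psik_trivial n (op : binop n) (k : nat) : bool :=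
  [forall s, forall t, psik op k s t == t].

Definition is_class n (op : binop n) (c : nat) : bool :=
  (0 < c) && psik_trivial op c && [forall k : 'I_c, (0 < k) ==> ~~ psik_trivial op k].

(* the class exists and divides d (for d >= 1 the class is then <= d) *)
Definition class_divides n (op : binop n) (d : nat) : bool :=
  [exists c : 'I_d.+1, is_class op c && (c %| d)].

Definition Ncs (n d : nat) : nat :=
  #|[set op : binop n | is_cycle_set op && class_divides op d]|.

(* Main.v *)
Require Import Defs.
From mathcomp Require Import all_boot.
Set Implicit Arguments. Unset Strict Implicit. Unset Printing Implicit Defensive.

Section Basics.
Variable n : nat.
Implicit Types (op : binop n) (s t u : 'I_n).

Lemma psik_iter op k s : psik op k s s = iter k (Tmap op) s.
Proof. by elim: k => //= k ->. Qed.

Lemma psik_add op a b s t :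
  psik op (a + b) s t = psik op b (psik op a s s) (psik op a s t).
Proof.
elim: b => [|b IH]; first by rewrite addn0.
by rewrite addnS /= IH psik_iter -iterD addnC.
Qed.

Lemma psik1 op s t : psik op 1 s t = op s t.
Proof. by []. Qed.

Lemma psikS op a s t : psik op a.+1 s t = psik op a (op s s) (op s t).
Proof. by rewrite -add1n psik_add. Qed.

Definition triv op k := forall s t, psik op k s t = t.

Lemma trivP op k : reflect (triv op k) (psik_trivial op k).
Proof.
apply: (iffP forallP) => [H s t|H s]; first by apply/eqP; have /forallP := H s.
by apply/forallP => t; rewrite H.
Qed.

Lemma triv_add op a b : triv op a -> triv op b -> triv op (a + b).
Proof. by move=> Ha Hb s t; rewrite psik_add !Ha Hb. Qed.

Lemma triv_mul op a j : triv op a -> triv op (a * j).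
Proof.
move=> Ha; elim: j => [|j IH]; first by rewrite muln0 => s t.
by rewrite mulnS; apply: triv_add.
Qed.

Lemma triv_sub op a b : triv op a -> triv op (a + b) -> triv op b.
Proof. by move=> Ha Hab s t; have := Hab s t; rewrite psik_add !Ha. Qed.

Lemma triv_mod op d m s t : triv op d -> psik op m s t = psik op (m %% d) s t.
Proof.
move=> Hd; rewrite {1}(divn_eq m d) psik_add.
have H := triv_mul (m %/ d) Hd; rewrite mulnC in H.
by rewrite !H.
Qed.

Definition cable op k : binop n := [ffun s => [ffun t => psik op k s t]].

Lemma iter_iter (T : Type) (f : T -> T) k m x :
  iter m (iter k f) x = iter (k * m) f x.
Proof.
elim: m => [|m IH]; first by rewrite muln0.
by rewrite mulnS iterD -IH.
Qed.

Lemma psik_cable op k m s t : psik (cable op k) m s t = psik op (k * m) s t.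
Proof.
elim: m t => [|m IH] t; first by rewrite muln0.
rewrite /= IH mulnS addnC psik_add !ffunE; congr (psik _ _ _ _).
rewrite psik_iter.
rewrite (@eq_iter _ _ (iter k (Tmap op))) ?iter_iter //.
by move=> x; rewrite /Tmap !ffunE psik_iter.
Qed.

Lemma triv_class_div op q : 0 < q -> triv op q -> class_divides op q.
Proof.
move=> q0 Hq.
pose P m := (0 < m) && psik_trivial op m.
have exP : exists m, P m by exists q; rewrite /P q0; apply/trivP.
case: (ex_minnP exP) => c /andP [c0 /trivP Hc] cmin.
have cq : c <= q by apply: cmin; rewrite /P q0; apply/trivP.
apply/existsP; exists (Ordinal (cq : c < q.+1)) => /=.
have Hdiv : c %| q.
  have Hr : triv op (q %% c).
    apply: (@triv_sub _ (q %/ c * c)); first by rewrite mulnC; apply: triv_mul.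
    by rewrite -divn_eq.
  rewrite /dvdn; apply/negPn/negP => Hne.
  have : c <= q %% c by apply: cmin; rewrite /P lt0n Hne; apply/trivP.
  by rewrite leqNgt ltn_mod c0.
rewrite Hdiv andbT /is_class c0 /=; apply/andP; split; first by apply/trivP.
apply/forallP => k; apply/implyP => k0; apply/negP => /trivP Hk.
have : c <= k by apply: cmin; rewrite /P k0; apply/trivP.
by rewrite leqNgt ltn_ord.
Qed.

Lemma class_div_triv op d : class_divides op d -> triv op d.
Proof.
case/existsP => c /andP [/andP [/andP [_ /trivP Hc] _] Hdiv].
by rewrite -(divnK Hdiv) mulnC; apply: triv_mul.
Qed.

End Basics.
Section Cycle.
Variable n : nat.
Implicit Types (op : binop n) (s t u : 'I_n).

Definition Iab op a b := forall s t u,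
  psik op b (psik op a s t) (psik op a s u) = psik op a (psik op b t s) (psik op b t u).

Lemma Isym op a b : Iab op a b -> Iab op b a.
Proof. by move=> H s t u; rewrite H. Qed.

Lemma Istep op a b : Iab op a b -> Iab op 1 b -> Iab op a.+1 b.
Proof.
move=> Hab H1 s t u.
rewrite !psikS Hab.
have E1 := H1 s t u; have E2 := H1 s t s; rewrite /= in E1 E2.
by rewrite E1 E2.
Qed.

Lemma Iall op : (forall s t u, op (op s t) (op s u) = op (op t s) (op t u)) ->
  forall a b, Iab op a b.
Proof.
move=> Hcs.
have I11 : Iab op 1 1 by move=> s t u /=; apply: Hcs.
have Ia1 : forall a, Iab op a 1.
  by elim=> [|a IH]; [move=> s t u | apply: Istep].
have I1b : forall b, Iab op 1 b by move=> b; apply: Isym.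
move=> a b; elim: a => [|a IH]; first by move=> s t u.
by apply: Istep.
Qed.

Lemma cable_cs op k : is_cycle_set op -> is_cycle_set (cable op k).
Proof.
case/andP => /forallP Hinj /forallP Hid.
have Hcs : forall s t u, op (op s t) (op s u) = op (op t s) (op t u).
  by move=> s t u; apply/eqP; move: (Hid s) => /forallP /(_ t) /forallP /(_ u).
apply/andP; split.
  apply/forallP => s; apply/injectiveP => x y; rewrite !ffunE.
  elim: k x y => [|k IH] x y //= /(injectiveP _ (Hinj _)); exact: IH.
apply/forallP => s; apply/forallP => t; apply/forallP => u; apply/eqP.
by rewrite !ffunE; apply: (Iall Hcs).
Qed.

End Cycle.
Section Count.
Variable n : nat.

Definition CS d := [set op : binop n | is_cycle_set op && class_divides op d].

Lemma agree_add (op1 op2 : binop n) a b :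
  (forall s t, psik op1 a s t = psik op2 a s t) ->
  (forall s t, psik op1 b s t = psik op2 b s t) ->
  (forall s t, psik op1 (a + b) s t = psik op2 (a + b) s t).
Proof. by move=> Ha Hb s t; rewrite !psik_add !Ha Hb. Qed.

Lemma agree_mul (op1 op2 : binop n) a j :
  (forall s t, psik op1 a s t = psik op2 a s t) ->
  (forall s t, psik op1 (a * j) s t = psik op2 (a * j) s t).
Proof.
move=> Ha; elim: j => [|j IH]; first by rewrite muln0.
by rewrite mulnS; apply: agree_add.
Qed.

Lemma pair_bound a b : 0 < a -> 0 < b -> coprime a b ->
  Ncs n (a * b) <= Ncs n a * Ncs n b.
Proof.
move=> a0 b0 cab.
pose f (op : binop n) := (cable op b, cable op a).
have finj : {in CS (a * b) &, injective f}.
  move=> op1 op2; rewrite !inE => /andP [_ /class_div_triv H1] /andP [_ /class_div_triv H2].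
  case=> Eb Ea.
  have Ab : forall s t, psik op1 b s t = psik op2 b s t.
    by move=> s t; have := congr1 (fun g : binop n => g s t) Eb; rewrite !ffunE.
  have Aa : forall s t, psik op1 a s t = psik op2 a s t.
    by move=> s t; have := congr1 (fun g : binop n => g s t) Ea; rewrite !ffunE.
  pose N := chinese a b 1 1.
  have AN : forall s t, psik op1 N s t = psik op2 N s t.
    rewrite /N /chinese !mul1n; apply: agree_add; exact: agree_mul.
  have NE : N %% (a * b) = 1 %% (a * b).
    apply/eqP; rewrite (chinese_remainder cab); apply/andP; split; apply/eqP.
      exact: chinese_modl.
    exact: chinese_modr.
  apply/ffunP => s; apply/ffunP => t.
  rewrite -!psik1 (triv_mod 1 s t H1) (triv_mod 1 s t H2) -NE.
  by rewrite -(triv_mod N s t H1) -(triv_mod N s t H2).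
rewrite /Ncs -/(CS (a * b)) -(card_in_imset finj) -/(CS a) -/(CS b) -cardsX.
apply: subset_leq_card; apply/subsetP => x /imsetP [op]; rewrite inE => /andP [cs cd] ->.
have Ht := class_div_triv cd.
rewrite !inE /= !cable_cs //=; apply/andP; split; apply: triv_class_div => // s t;
  rewrite psik_cable; [rewrite mulnC|]; exact: Ht.
Qed.

Lemma Ncs1 : Ncs n 1 <= 1.
Proof.
have -> : Ncs n 1 <= 1 = (Ncs n 1 <= #|[set [ffun s : 'I_n => [ffun t : 'I_n => t]]]|).
  by rewrite cards1.
apply: subset_leq_card; apply/subsetP => op; rewrite !inE => /andP [_ /class_div_triv H].
by apply/eqP/ffunP => s; apply/ffunP => t; rewrite !ffunE; have := H s t; rewrite /= => ->.
Qed.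

Lemma seq_bound (e : nat -> nat) (sq : seq nat) : uniq sq -> all prime sq ->
  Ncs n (\prod_(p <- sq) p ^ e p) <= \prod_(p <- sq) Ncs n (p ^ e p).
Proof.
elim: sq => [|p sq IH]; first by rewrite !big_nil => _ _; exact: Ncs1.
rewrite /= => /andP [pn u] /andP [pp ap]; rewrite !big_cons.
have pos : 0 < \prod_(q <- sq) q ^ e q.
  rewrite big_seq_cond; apply: (big_ind (fun x => 0 < x)) => //; first by move=> x y; rewrite muln_gt0 => -> ->.
  move=> q /andP [qi _]; rewrite expn_gt0; apply/orP; left; apply: prime_gt0.
  by move/allP: ap; apply.
have cop : coprime (p ^ e p) (\prod_(q <- sq) q ^ e q).
  apply: coprimeXl; rewrite big_seq_cond.
  apply: (big_ind (fun x => coprime p x)); [exact: coprimen1| by move=> x y; rewrite coprimeMr => -> ->|].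
  move=> q /andP [qi _]; apply: coprimeXr; rewrite prime_coprime // dvdn_prime2 //; last by move/allP: ap; apply.
  by apply/eqP => E; move: pn; rewrite E qi.
apply: leq_trans (pair_bound _ _ cop) _; first by rewrite expn_gt0 prime_gt0.
  done.
by apply: leq_mul => //; apply: IH.
Qed.

End Count.

Theorem mainTheorem14 (n d : nat) : 0 < n -> 0 < d ->
  Ncs n d <= \prod_(p <- primes d) Ncs n (p ^ logn p d).
Proof.
move=> _ d0.
have E : d = \prod_(p <- primes d) p ^ logn p d.
  by rewrite {1}(prod_prime_decomp d0) prime_decompE big_map.
rewrite {1}E; apply: seq_bound; [exact: primes_uniq | exact: all_prime_primes].
Qed.
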